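(* Fix $\beta>0$ and a transient MDP with a sink state as in the context. For each stationary policy $\pi=(\bm d)_\infty\in\Pi_{\mathrm{SR}}$ and each $\bm z\in\mathbb R^S$ with $\bm z\ge\bm 0$: \[ \bm w^\infty(\pi,\bm z)>-\bm\infty\quad\Longrightarrow\quad\rho(\bm B^{\bm d})<1, \] where $\rho$ denotes the spectral radius.
   Context: MDP: states $\bar{\mathcal S}=\{1,\dots,S,S+1\}$, $e:=S+1$ a sink state, $\mathcal S=\{1,\dots,S\}$; finite actions $\mathcal A$; transitions $p(s,a,s')$, real rewards $r(s,a,s')$ of arbitrary sign; $p(e,a,e)=1$, $r(e,a,e)=0$. Transience (standing assumption): for every stationary deterministic policy $\pi$, $\sum_{t\ge0}\mathbb P^{\pi,s}[\tilde s_t=s']<\infty$ for all $s,s'\in\mathcal S$. A decision rule $\bm d$ assigns to each $s\in\mathcal S$ a distribution $(d_a(s))_a$ over actions; $\Pi_{\mathrm{SR}}$ is the set of stationary randomized policies $(\bm d)_\infty$. Define $B^{\bm d}_{s,s'}=\sum_a p(s,a,s')d_a(s)e^{-\beta r(s,a,s')}$ and $b^{\bm d}_s=\sum_a p(s,a,e)d_a(s)e^{-\beta r(s,a,e)}$ for $s,s'\in\mathcal S$. For $t\in\mathbb N$ and $\bm z\in\mathbb R^S$: $\bm w^t(\pi,\bm z)=-(\bm B^{\bm d})^t\bm z-\sum_{k=0}^{t-1}(\bm B^{\bm d})^k\bm b^{\bm d}$, and $\bm w^\infty(\pi,\bm z)=\liminf_{t\to\infty}\bm w^t(\pi,\bm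 z)$ componentwise; $>-\bm\infty$ means every component is finite. *)

(* Defs.v *)
From HB Require Import structures.
From mathcomp Require Import all_boot all_order all_algebra.
From mathcomp Require Import all_classical all_reals all_analysis.
From mathcomp Require Import complex.

Set Implicit Arguments.
Unset Strict Implicit.
Unset Printing Implicit Defensive.

Import Order.TTheory GRing.Theory Num.Theory.
Local Open Scope ring_scope.
Local Open Scope classical_set_scope.

(* t-th power of a square matrix (works also for n = 0). *)
Definition mxpow (R : comRingType) (n : nat) (M : 'M[R]_n) (t : nat) : 'M[R]_n :=
  iter t (mulmx M) 1%:M.

(* Spectral radius of a real square matrix: the largest modulus of its
   complex eigenvalues (0 for the empty matrix, by the convention sup set0 = 0). *)
Definition spectral_radius (R : realType) (n : nat) (M : 'M[R]_n) : R :=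
  sup [set Normc.normc l | l in
        [set l : R[i] | eigenvalue (map_mx (fun x : R => x%:C%C) M) l]].

(* MDP with states {0,...,S}; the last state ord_max (= S+1 in the      *)
(* paper's 1-based numbering) is the sink e; the non-sink states are   *)
(* 'I_S, embedded by widen_ord.                                         *)

Definition sink (S : nat) : 'I_S.+1 := ord_max.
Definition inS (S : nat) (s : 'I_S) : 'I_S.+1 := widen_ord (leqnSn S) s.

Section MDP.
Variables (R : realType) (S : nat) (A : finType).
Variable p : 'I_S.+1 -> A -> 'I_S.+1 -> R.
Variable r : 'I_S.+1 -> A -> 'I_S.+1 -> R.

Definition is_transition_kernel : Prop :=
  (forall s a s', 0 <= p s a s') /\ (forall s a, \sum_(s' < S.+1) p s a s' = 1).

Definition sink_absorbing : Prop :=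
  forall a, p (sink S) a (sink S) = 1 /\ r (sink S) a (sink S) = 0.

Definition Pmat (pi : 'I_S.+1 -> A) : 'M[R]_S.+1 :=
  \matrix_(s, s') p s (pi s) s'.

Definition state_prob (pi : 'I_S.+1 -> A) (s s' : 'I_S.+1) (t : nat) : R :=
  (Pmat pi ^+ t) s s'.

(* Transience: for every stationary deterministic policy, the expected
   number of visits sum_t P^{pi,s}[s_t = s'] is finite (nonnegative terms,
   i.e. bounded partial sums) for all non-sink s, s'. *)
Definition transient : Prop :=
  forall (pi : 'I_S.+1 -> A) (s s' : 'I_S),
    exists M : R, forall n : nat,
      \sum_(t < n) state_prob pi (inS s) (inS s') t <= M.

Definition decision_rule (d : 'I_S -> A -> R) : Prop :=
  (forall s a, 0 <= d s a) /\ (forall s, \sum_a d s a = 1).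

Variable beta : R.

Definition Bmat (d : 'I_S -> A -> R) : 'M[R]_S :=
  \matrix_(s, s') \sum_a
     p (inS s) a (inS s') * d s a * expR (- beta * r (inS s) a (inS s')).

Definition bvec (d : 'I_S -> A -> R) : 'cV[R]_S :=
  \col_s \sum_a
     p (inS s) a (sink S) * d s a * expR (- beta * r (inS s) a (sink S)).

Definition w_t (d : 'I_S -> A -> R) (z : 'cV[R]_S) (t : nat) : 'cV[R]_S :=
  - (mxpow (Bmat d) t *m z) - \sum_(k < t) (mxpow (Bmat d) k *m bvec d).

Definition w_inf (d : 'I_S -> A -> R) (z : 'cV[R]_S) (s : 'I_S) : \bar R :=
  limn_einf (fun t => ((w_t d z t) s ord0)%:E).

End MDP.

(* Main.v *)
Require Import Defs.
From HB Require Import structures.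
From mathcomp Require Import all_boot all_order all_algebra.
From mathcomp Require Import all_classical all_reals all_analysis.
From mathcomp Require Import complex.
From mathcomp Require Import lra.
Import Order.TTheory GRing.Theory Num.Theory.
Local Open Scope ring_scope.

Set Implicit Arguments.
Unset Strict Implicit.

Lemma sum_ge_term (R : numDomainType) (I : finType) (F : I -> R) (i : I) :
  (forall j, 0 <= F j) -> F i <= \sum_j F j.
Proof.
move=> h; rewrite (bigD1 i) //= lerDl; exact: sumr_ge0.
Qed.

Lemma sum_mono_n (R : numDomainType) (f : nat -> R) (n m : nat) :
  (forall k, 0 <= f k) -> (n <= m)%N -> \sum_(k < n) f k <= \sum_(k < m) f k.
Proof.
move=> h hnm; rewrite -(subnKC hnm) big_split_ord /= lerDl.
exact: sumr_ge0.
Qed.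

Lemma sum_shift_le (R : numDomainType) (f : nat -> R) (n m : nat) :
  (forall k, 0 <= f k) -> \sum_(k < n) f (m + k)%N <= \sum_(k < m + n) f k.
Proof.
move=> h; rewrite big_split_ord /= lerDr; exact: sumr_ge0.
Qed.

Lemma fin_bound (R : realDomainType) (I : finType) (P : pred I) (f : I -> nat -> R) :
  (forall i, exists K, forall n, f i n <= K) ->
  exists K, forall n, \sum_(i | P i) f i n <= K.
Proof.
move=> h; have [g hg] := boolp.choice h.
exists (\sum_(i | P i) g i) => n; apply: ler_sum => i _; exact: hg.
Qed.

Lemma mxpowS (R : comRingType) (n : nat) (M : 'M[R]_n) k :
  mxpow M k.+1 = M *m mxpow M k.
Proof. by []. Qed.

Lemma mxpowD (R : comRingType) (n : nat) (M : 'M[R]_n) k m :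
  mxpow M (k + m) = mxpow M k *m mxpow M m.
Proof.
elim: k => [|k IH]; first by rewrite add0n /= mul1mx.
by rewrite addSn !mxpowS IH mulmxA.
Qed.

Lemma mxpow_ge0 (R : realDomainType) (n : nat) (M : 'M[R]_n) k :
  (forall i j, 0 <= M i j) -> forall i j, 0 <= mxpow M k i j.
Proof.
move=> h; elim: k => [|k IH] i j.
  by rewrite /mxpow /= mxE mulrn_wge0.
rewrite mxpowS mxE; apply: sumr_ge0 => l _; exact: mulr_ge0.
Qed.

Lemma mxpow_map (R T : comRingType) (n : nat) (M : 'M[R]_n) k (f : {rmorphism R -> T}) :
  map_mx f (mxpow M k) = mxpow (map_mx f M) k.
Proof.
elim: k => [|k IH]; first by rewrite /mxpow /= map_mx1.
by rewrite !mxpowS map_mxM IH.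
Qed.

Lemma sum_gt0_term (R : numDomainType) (I : finType) (F : I -> R) (i : I) :
  (forall j, 0 <= F j) -> 0 < F i -> 0 < \sum_j F j.
Proof. by move=> h hi; exact: (lt_le_trans hi (sum_ge_term i h)). Qed.

Lemma inS_eq (S : nat) (j j' : 'I_S) : (inS j == inS j') = (j == j').
Proof.
apply/idP/idP => /eqP h; apply/eqP; last by rewrite h.
by apply: val_inj; exact: (congr1 val h).
Qed.

Lemma reach (R : realType) (S : nat) (A : finType)
  (p r : 'I_S.+1 -> A -> 'I_S.+1 -> R) (beta : R)
  (hp : is_transition_kernel p) (htrans : transient p)
  (d : 'I_S -> A -> R) (hd : decision_rule d) :
  forall j, exists m, 0 < (mxpow (Bmat p r beta d) m *m bvec p r beta d) j ord0.
Proof.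
move=> j0; apply: boolp.contrapT => hj0.
set B := Bmat p r beta d; set b := bvec p r beta d.
have Bge0 : forall i j, 0 <= B i j.
  move=> i j; rewrite mxE; apply: sumr_ge0 => a _.
  by rewrite !mulr_ge0 ?hp.1 ?hd.1 ?expR_ge0.
have bge0 : forall i, 0 <= b i ord0.
  move=> i; rewrite mxE; apply: sumr_ge0 => a _.
  by rewrite !mulr_ge0 ?hp.1 ?hd.1 ?expR_ge0.
have Pbge0 : forall m i, 0 <= (mxpow B m *m b) i ord0.
  move=> m i; rewrite mxE; apply: sumr_ge0 => l _.
  by rewrite mulr_ge0 ?bge0 ?mxpow_ge0.
pose good j := exists m, 0 < (mxpow B m *m b) j ord0.
pose ug j : bool := `[< ~ good j >].
have hact : forall j, exists a, 0 < d j a.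
  move=> j; apply: boolp.contrapT => hn.
  have : \sum_a d j a = 0.
    apply: big1 => a _; apply/eqP; rewrite eq_le hd.1 andbT leNgt.
    by apply/negP => ha; apply: hn; exists a.
  by rewrite hd.2 => /eqP; rewrite oner_eq0.
have [act hact'] := boolp.choice hact.
have F1 : forall j, ug j -> p (inS j) (act j) (sink S) = 0.
  move=> j /asboolP hj; apply/eqP; rewrite eq_le hp.1 andbT leNgt.
  apply/negP => hpos; apply: hj; exists 0%N.
  rewrite /mxpow /= mul1mx /b /bvec mxE.
  apply: (@sum_gt0_term _ _ _ (act j)).
    by move=> a; rewrite !mulr_ge0 ?hp.1 ?hd.1 ?expR_ge0.
  by rewrite !mulr_gt0 // expR_gt0.
have F2 : forall j j', ug j -> ~~ ug j' -> p (inS j) (act j) (inS j') = 0.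
  move=> j j' /asboolP hj /asboolPn hj'.
  have [m hm] := boolp.contrapT hj'.
  apply/eqP; rewrite eq_le hp.1 andbT leNgt.
  apply/negP => hpos; apply: hj; exists m.+1.
  rewrite mxpowS -mulmxA mxE.
  apply: (@sum_gt0_term _ _ _ j').
    by move=> l; rewrite mulr_ge0 ?Bge0 ?Pbge0.
  apply: mulr_gt0 hm; rewrite mxE.
  apply: (@sum_gt0_term _ _ _ (act j)).
    by move=> a; rewrite !mulr_ge0 ?hp.1 ?hd.1 ?expR_ge0.
  by rewrite !mulr_gt0 // expR_gt0.
have Frow : forall j, ug j -> \sum_(j' | ug j') p (inS j) (act j) (inS j') = 1.
  move=> j hj; have := hp.2 (inS j) (act j).
  rewrite big_ord_recr /= F1 // addr0 (bigID ug) /= [X in _ + X]big1 ?addr0 //.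
  by move=> j' hj'; apply: F2.
pose pi := fun s : 'I_S.+1 => odflt (act j0) (omap act (insub (val s) : option 'I_S)).
have hpi : forall j, pi (inS j) = act j.
  by move=> j; rewrite /pi /= valK.
have Fst : forall t j, ug j ->
    \sum_(j' | ug j') (Pmat p pi ^+ t) (inS j) (inS j') = 1.
  elim=> [|t IH] j hj.
    rewrite expr0 (bigD1 j) //= big1 ?addr0; first by rewrite mxE eqxx.
    by move=> j' /andP[_ hne]; rewrite mxE inS_eq eq_sym (negbTE hne).
  rewrite exprS.
  under eq_bigr do rewrite -mulmxE mxE.
  rewrite exchange_big /=.
  under eq_bigr do rewrite -mulr_sumr.
  rewrite big_ord_recr /= [X in _ + X * _]mxE hpi F1 // mul0r addr0.
  rewrite (bigID ug) /= [X in _ + X]big1 ?addr0; last first.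
    by move=> k hk; rewrite mxE hpi F2 // mul0r.
  rewrite -(Frow j hj); apply: eq_bigr => k hk.
  by rewrite IH // mulr1 mxE hpi.
have [M hM] : exists M, forall n,
    \sum_(j' | ug j') \sum_(t < n) state_prob p pi (inS j0) (inS j') t <= M.
  by apply: fin_bound => j'; exact: htrans pi j0 j'.
have hug0 : ug j0 by apply/asboolP.
have hn : forall n : nat, n%:R <= M.
  move=> n; apply: le_trans (hM n); rewrite exchange_big /=.
  under eq_bigr do rewrite /state_prob Fst //.
  by rewrite sumr_const card_ord.
have := hn (Num.bound `|M|).
have := archi_boundP (normr_ge0 M).
have := ler_norm M.
move=> h1 h2 h3.
have := le_lt_trans (le_trans h3 h1) h2.
by rewrite ltxx.
Qed.

Lemma bern (R : realFieldType) (e : R) n : 0 <= e -> e <= 1 ->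
  1 - n%:R * e <= (1 - e) ^+ n.
Proof.
move=> h0 h1; elim: n => [|n IH]; first by rewrite expr0 mul0r subr0.
rewrite exprS -natr1.
have hx : 0 <= (1 - e) ^+ n by rewrite exprn_ge0 // subr_ge0.
have hn : 0 <= n%:R * e * e :> R by rewrite !mulr_ge0.
nra.
Qed.

Lemma eig_bound (R : realType) n (B : 'M[R]_n) (hB : forall i j, 0 <= B i j) N
  (l : R[i]) :
  eigenvalue (map_mx (fun x : R => x%:C%C) B) l ->
  Normc.normc l ^+ N <= \sum_i \sum_j mxpow B N i j.
Proof.
move=> /eigenvalueP [v hv vn0].
have hvN : v *m mxpow (map_mx (fun x : R => x%:C%C) B) N = l ^+ N *: v.
  elim: N => [|N IH]; first by rewrite /mxpow /= mulmx1 expr0 scale1r.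
  by rewrite mxpowS mulmxA hv -scalemxAl IH scalerA exprS.
have emap : forall i j, mxpow (map_mx (fun x : R => x%:C%C) B) N i j = (mxpow B N i j)%:C%C.
  move=> i j; have := mxpow_map B N (real_complex R).
  by move=> <-; rewrite mxE.
set T := \sum_i \sum_j mxpow B N i j.
have key : forall j, `|l| ^+ N * `|v 0 j| <= \sum_i `|v 0 i| * (mxpow B N i j)%:C%C.
  move=> j; move: (hvN) => /matrixP /(_ 0 j); rewrite mxE [in X in _ = X]mxE => e.
  rewrite -normrX -normrM -e; apply: le_trans (ler_norm_sum _ _ _) _.
  apply: ler_sum => i _; rewrite normrM emap.
  have h0 : 0 <= (mxpow B N i j)%:C%C by rewrite ler0c; exact: mxpow_ge0.
  by rewrite (ger0_norm h0).
have hsum : `|l| ^+ N * \sum_j `|v 0 j| <= T%:C%C * \sum_j `|v 0 j|.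
  rewrite mulr_sumr; apply: le_trans (ler_sum _ (fun j _ => key j)) _.
  rewrite exchange_big /= mulr_sumr; apply: ler_sum => i _.
  rewrite -mulr_sumr mulrC; apply: ler_wpM2r; first exact: normr_ge0.
  rewrite -rmorph_sum lecR /T.
  apply: (@sum_ge_term _ _ (fun i => \sum_j mxpow B N i j)) => i'.
  by apply: sumr_ge0 => j _; exact: mxpow_ge0.
have [j hj] : exists j, v 0 j != 0.
  apply: boolp.contrapT => hn; move/eqP: vn0; apply; apply/rowP => j.
  rewrite mxE; apply/eqP; rewrite -[_ == _]negbK; apply/negP => h; apply: hn.
  by exists j.
have hpos : 0 < \sum_j `|v 0 j|.
  apply: (@sum_gt0_term _ _ _ j) => [j'|]; first exact: normr_ge0.
  by rewrite normr_gt0.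
move: hsum; rewrite ler_pM2r //.
have -> : `|l| = (Normc.normc l)%:C%C by clear; case: l.
by rewrite -rmorphXn lecR.
Qed.

Unset Implicit Arguments.
Set Strict Implicit.

Theorem lemma2 (R : realType) (S : nat) (A : finType)
  (p r : 'I_S.+1 -> A -> 'I_S.+1 -> R) (beta : R)
  (hbeta : 0 < beta)
  (hp : is_transition_kernel p)
  (hsink : sink_absorbing p r)
  (htrans : transient p)
  (d : 'I_S -> A -> R) (hd : decision_rule d)
  (z : 'cV[R]_S) (hz : forall s, 0 <= z s ord0) :
  (forall s : 'I_S, w_inf p r beta d z s \is a fin_num) ->
  spectral_radius (Bmat p r beta d) < 1.
Proof.
move=> hw.
set B := Bmat p r beta d; set b := bvec p r beta d.
have Bge0 : forall i j, 0 <= B i j.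
  move=> i j; rewrite mxE; apply: sumr_ge0 => a _.
  by rewrite !mulr_ge0 ?hp.1 ?hd.1 ?expR_ge0.
have bge0 : forall i, 0 <= b i ord0.
  move=> i; rewrite mxE; apply: sumr_ge0 => a _.
  by rewrite !mulr_ge0 ?hp.1 ?hd.1 ?expR_ge0.
have Pbge0 : forall m i, 0 <= (mxpow B m *m b) i ord0.
  move=> m i; rewrite mxE; apply: sumr_ge0 => l _.
  by rewrite mulr_ge0 ?bge0 ?mxpow_ge0.
have Pzge0 : forall m i, 0 <= (mxpow B m *m z) i ord0.
  move=> m i; rewrite mxE; apply: sumr_ge0 => l _.
  by rewrite mulr_ge0 ?hz ?mxpow_ge0.
have hbound : forall i, exists K, forall n,
    \sum_(k < n) (mxpow B k *m b) i ord0 <= K.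
  move=> i; apply: boolp.contrapT => hK.
  have := hw i.
  suff -> : w_inf p r beta d z i = -oo%E by [].
  rewrite /w_inf; apply: (cvgNy_limn_einf_sup _).1.
  apply/cvgeNyPle => Aa.
  have [n0 hn0] : exists n0, - Aa < \sum_(k < n0) (mxpow B k *m b) i ord0.
    apply: boolp.contrapT => hn; apply: hK; exists (- Aa) => n.
    rewrite leNgt; apply/negP => h; apply: hn; exists n; exact: h.
  exists n0 => // m /= hm.
  have ew : (w_t p r beta d z m) i ord0 =
      - (mxpow B m *m z) i ord0 - \sum_(k < m) (mxpow B k *m b) i ord0.
    by rewrite /w_t !(mxE, summxE).
  rewrite lee_fin ew.
  have h1 := @sum_mono_n _ (fun k => (mxpow B k *m b) i ord0) _ _ (fun k => Pbge0 k i) hm.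
  have h2 := Pzge0 m i.
  rewrite /= in h1; lra.
have hBb : forall i j, exists K, forall n, \sum_(k < n) mxpow B k i j <= K.
  move=> i j.
  have [m hm] := @reach _ _ _ p r beta hp htrans d hd j.
  have [K hK] := hbound i.
  exists (K / (mxpow B m *m b) j ord0) => n.
  rewrite ler_pdivlMr // mulr_suml.
  apply: le_trans (hK (m + n)%N).
  apply: le_trans (@sum_shift_le _ (fun k => (mxpow B k *m b) i ord0) n m _); last first.
    by move=> k; exact: Pbge0.
  apply: ler_sum => k _; rewrite /= addnC mxpowD -mulmxA [X in _ <= X]mxE.
  apply: (@sum_ge_term _ _ (fun l => mxpow B k i l * (mxpow B m *m b) l ord0) j).
  by move=> l; rewrite mulr_ge0 ?Pbge0 ?mxpow_ge0.
have [K hK] : exists K, forall n,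
    \sum_(k < n) \sum_i \sum_j mxpow B k i j <= K.
  have h1 : forall i, exists K, forall n, \sum_j \sum_(k < n) mxpow B k i j <= K.
    move=> i; exact: (@fin_bound _ _ predT (fun j n => \sum_(k < n) mxpow B k i j) (hBb i)).
  have [K hK] := @fin_bound _ _ predT (fun i n => \sum_j \sum_(k < n) mxpow B k i j) h1.
  exists K => n; apply: (le_trans _ (hK n)); rewrite exchange_big /=.
  apply: ler_sum => i _; rewrite exchange_big /=; exact: lexx.
have [N hN] : exists N, \sum_i \sum_j mxpow B N i j <= 2^-1.
  apply: boolp.contrapT => hn.
  have hgt : forall k, 2^-1 < \sum_i \sum_j mxpow B k i j.
    move=> k; rewrite ltNge; apply/negP => h; apply: hn; exists k; exact: h.
  pose n := Num.bound (2 * `|K|).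
  have h1 := hK n.
  have h2 : \sum_(k < n) (2^-1 : R) <= \sum_(k < n) \sum_i \sum_j mxpow B k i j.
    by apply: ler_sum => k _; exact: ltW.
  rewrite sumr_const card_ord -mulr_natr in h2.
  have h3 := archi_boundP (x := 2 * `|K|) (mulr_ge0 (ler0n _ 2) (normr_ge0 K)).
  have h4 := ler_norm K.
  rewrite -/n in h3; lra.
pose e : R := (2 * N.+1%:R)^-1.
have e0 : 0 < e by rewrite invr_gt0 mulr_gt0 // ltr0n.
have eN : N%:R * e < 2^-1.
  rewrite /e ltr_pdivrMr ?mulr_gt0 ?ltr0n //.
  rewrite -(natr1 N); move: (N%:R : R) => x; rewrite mulrA mulVf ?pnatr_eq0 // mul1r.
  by rewrite ltrDl ltr01.
have e1 : e <= 1.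
  rewrite /e invr_le1 ?mulr_gt0 ?ltr0n // ?unitfE ?mulf_neq0 ?pnatr_eq0 //.
  rewrite -(natr1 N) (natrD _ 1 1) mulrDl mul1r; move: (N%:R : R) (ler0n R N) => x hx; clear -hx; lra.
have hq : forall l, eigenvalue (map_mx (fun x : R => x%:C%C) B) l ->
    Normc.normc l <= 1 - e.
  move=> l hl.
  have h1 := le_trans (@eig_bound _ _ B Bge0 N l hl) hN.
  have q0 : 0 <= Normc.normc l by clear; case: l => a b0; exact: sqrtr_ge0.
  rewrite leNgt; apply/negP => hlt.
  have h2 := @bern _ e N (ltW e0) e1.
  have h3 : (1 - e) ^+ N <= Normc.normc l ^+ N.
    by rewrite lerXn2r // ?nnegrE ?subr_ge0 // ltW.
  have := le_trans h2 (le_trans h3 h1); move: eN.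
  move: (N%:R * e) => x; clear; move=> hx hx2.
  have : 2^-1 < 1 - x :> R.
    lra.
  by rewrite ltNge hx2.
rewrite /spectral_radius.
set E := (image _ _).
have [hne|he] := pselect (E !=set0)%classic.
  apply: (@le_lt_trans _ _ (1 - e) _ _ (ge_sup hne _)); last by rewrite -subr_gt0 opprB addrC subrK.
  by move=> x [l hl <-]; exact: hq.
have -> : E = set0%classic.
  by apply/seteqP; split => x // hx; apply: he; exists x.
by rewrite sup0 ltr01.
Qed.
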